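(* For every prime $n\ge 5$, the regular origami $\big(A_n,(1,2,3),(1,2,3,\dots,n)\big)$, where $A_n$ is the alternating group on $\{1,\dots,n\}$, $x=(1,2,3)$ and $y=(1,2,\dots,n)$, has a totally non-congruence group as Veech group.
   Context: A regular origami $(G,x,y)$ is given by a finite group $G$ generated by two elements $x,y$: it is the translation surface obtained from unit squares indexed by the elements $g\in G$, where the right edge of square $g$ is glued to the left edge of square $gx$ and the top edge of square $g$ is glued to the bottom edge of square $gy$. Two regular origamis $(G,x,y)$, $(G',x',y')$ are identified if there is a group isomorphism $G\to G'$ with $x\mapsto x'$, $y\mapsto y'$. The group $\mathrm{SL}(2,\mathbb{Z})$ acts on regular origamis via $S\cdot(G,x,y)=(G,y^{-1},x)$ and $T\cdot(G,x,y)=(G,x,yx^{-1})$, where $S=\begin{pmatrix}0&-1\\1&0\end{pmatrix}$, $T=\begin{pmatrix}1&1\\0&1\end{pmatrix}$. The Veech group of a regular origami is its stabilizer under this action, a finite index subgroup of $\mathrm{SL}(2,\mathbb{Z})$. A finite index subgroup $\Gamma\le\mathrm{SL}(2,\mathbb{Z})$ is a totally non-congruence group if for every integer $n\ge1$ the reduction map $\mathrm{SL}(2,\mathbb{Z})\to\mathrm{SL}(2,\mathbb{Z}/n\mathbb{Z})$ restricted to $\Gamma$ is surjective. *)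

(* Defs.v *)
From HB Require Import structures.
From mathcomp Require Import all_boot all_order all_algebra all_fingroup all_solvable.
Set Implicit Arguments. Unset Strict Implicit. Unset Printing Implicit Defensive.
Import GRing.Theory Num.Theory.

Definition regular_origami (gT : finGroupType) (G : {group gT}) (x y : gT) : Prop :=
  G :=: <<[set x; y]>>%g.

Definition origami_iso (gT : finGroupType) (G : {group gT}) (p q : gT * gT) : Prop :=
  exists f : {morphism G >-> gT}, [/\ isom G G f, f p.1 = q.1 & f p.2 = q.2].

Inductive sl2gen := genS | genSinv | genT | genTinv.

Local Open Scope group_scope.
Definition act_gen (gT : finGroupType) (g : sl2gen) (p : gT * gT) : gT * gT :=
  match g with
  | genS => (p.2^-1, p.1)
  | genSinv => (p.2, p.1^-1)
  | genT => (p.1, p.2 * p.1^-1)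
  | genTinv => (p.1, p.2 * p.1)
  end.
Local Close Scope group_scope.

Definition act_word (gT : finGroupType) (w : seq sl2gen) (p : gT * gT) : gT * gT :=
  foldr (@act_gen gT) p w.

Local Open Scope ring_scope.

Definition mx2 (a b c d : int) : 'M[int]_2 :=
  \matrix_(i < 2, j < 2)
    if (i == 0 :> nat) then (if (j == 0 :> nat) then a else b)
    else (if (j == 0 :> nat) then c else d).

Definition gen_mx (g : sl2gen) : 'M[int]_2 :=
  match g with
  | genS => mx2 0 (-1) 1 0
  | genSinv => mx2 0 1 (-1) 0
  | genT => mx2 1 1 0 1
  | genTinv => mx2 1 (-1) 0 1
  end.

Definition word_mx (w : seq sl2gen) : 'M[int]_2 :=
  foldr (fun g M => gen_mx g *m M) 1%:M w.

Definition veech_group (gT : finGroupType) (G : {group gT}) (x y : gT)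
  : 'M[int]_2 -> Prop :=
  fun A => exists w : seq sl2gen,
      word_mx w = A /\ origami_iso G (x, y) (act_word w (x, y)).

Definition red_mx (n : nat) (A : 'M[int]_2) : 'M['Z_n]_2 :=
  map_mx (fun z : int => z%:~R) A.

(* Totally non-congruence: for every n >= 1 the reduction SL(2,Z) -> SL(2,Z/nZ)
   restricted to Gamma is surjective.  For n = 1, SL(2,Z/1Z) is trivial, so this
   means Gamma is nonempty; for n >= 2 we use 'Z_n (= Z/nZ). *)
Definition totally_non_congruence (Gamma : 'M[int]_2 -> Prop) : Prop :=
  (exists A, Gamma A) /\
  forall n : nat, (1 < n)%N ->
    forall B : 'M['Z_n]_2, \det B = 1 -> exists A, Gamma A /\ red_mx n A = B.

Local Close Scope ring_scope.

Definition cyc3 (n k : nat) : nat :=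
  if (3 <= n)%N then
    (if k == 0%N then 1%N else if k == 1%N then 2%N else if k == 2%N then 0%N else k)
  else k.

Lemma cyc3_lt n (i : 'I_n) : (cyc3 n i < n)%N.
Proof.
rewrite /cyc3; case: ifP => // h3.
case: eqP => [_|_]; first exact: leq_trans h3.
case: eqP => [_|_]; first exact: leq_trans h3.
by case: eqP => [_|_]; [exact: leq_trans h3|].
Qed.

Definition cyc3_fun n (i : 'I_n) : 'I_n := Ordinal (cyc3_lt i).

Lemma cyc3_fun_inj n : injective (@cyc3_fun n).
Proof.
move=> i j /(congr1 val) /=; rewrite /cyc3; case: ifP => _ h; last exact: val_inj.
apply: val_inj; move: h.
case: i => [[|[|[|i]]] Hi]; case: j => [[|[|[|j]]] Hj] //=.
Qed.

(* x = (1,2,3): 0 -> 1 -> 2 -> 0 (labels shifted by one) *)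
Definition cycle3 (n : nat) : {perm 'I_n} := perm (@cyc3_fun_inj n).
Definition cyclen (n : nat) : {perm 'I_n} := perm (@ordS_inj n).

(* Main.v *)
Require Import Defs.
From mathcomp Require Import all_boot all_order all_algebra all_fingroup all_solvable.
From mathcomp Require Import zify ring.
Lemma cycle3E n (i : 'I_n) : val (cycle3 n i) = cyc3 n i.
Proof. by rewrite /cycle3 permE. Qed.
Lemma cyclenE n (i : 'I_n) : val (cyclen n i) = (i.+1 %% n)%N.
Proof. by rewrite /cyclen permE. Qed.
Definition t01 n : {perm 'I_n.+2} := tperm (inord 0) (inord 1).
Lemma t01E n (i : 'I_n.+2) :
  val (t01 n i) = if val i == 0%N then 1%N else if val i == 1%N then 0%N else val i.
Proof.
rewrite /t01 permE /=.
case: (i =P inord 0) => [->|/eqP h0]; first by rewrite !inordK.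
case: (i =P inord 1) => [->|/eqP h1]; first by rewrite !inordK.
have -> : (val i == 0%N) = false.
  by apply/negbTE; apply: contra h0 => /eqP h; apply/eqP/val_inj; rewrite /= inordK // h.
have -> : (val i == 1%N) = false.
  by apply/negbTE; apply: contra h1 => /eqP h; apply/eqP/val_inj; rewrite /= inordK // h.
by [].
Qed.
Lemma modS_lt k N : (k < N -> k.+1 %% N = if k.+1 == N then 0 else k.+1)%N.
Proof. move=> h; case: eqP => [->|ne]; first by rewrite modnn. by rewrite modn_small; lia. Qed.

Ltac crunch := repeat (first [case: ifP => /eqP ? | case: ifP => /negbT ? | case: eqP => ?]); try lia.

Lemma xt n : (2 < n)%N -> ((cycle3 n.+2) ^ (t01 n) = cycle3 n.+2 * cycle3 n.+2)%g.
Proof.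
move=> hn; apply/permP => i; rewrite conjgE !permM /t01 tpermV -/(t01 n).
apply: val_inj; rewrite /= !(t01E, cyclenE, cycle3E) /cyc3 /=.
have h2 : (2 < n.+2)%N = true by lia.
move: (val i) (ltn_ord i) => k hk; rewrite h2.
by case: k hk => [|[|[|k]]] hk.
Qed.

Lemma yX n (i : 'I_n) k : val (((cyclen n) ^+ k)%g i) = ((i + k) %% n)%N.
Proof.
rewrite permX; elim: k => [|k IH] /=; first by rewrite addn0 modn_small.
by rewrite cyclenE IH -addn1 modnDml addn1 addnS.
Qed.

Lemma yn n : ((cyclen n) ^+ n = 1)%g.
Proof. by apply/permP => i; apply: val_inj; rewrite yX perm1 modnDr modn_small. Qed.

Definition zz n := (cyclen n * (cycle3 n * cycle3 n))%g.

Lemma zE n (i : 'I_n.+2) : (2 < n)%N ->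
  val (zz n.+2 i) = if (i < 2)%N then val i else if val i == n.+1 then 2%N else (val i).+1.
Proof.
move=> hn; case: i => k hk; rewrite /zz !permM !(cyclenE, cycle3E) /cyc3 /=.
have h2 : (2 < n.+2)%N = true by lia.
rewrite h2 (@modS_lt _ _ hk).
case: (eqVneq k.+1 n.+2) => e /=.
  have -> : k = n.+1 by lia.
  by rewrite eqxx; case: ifP => /= ?; lia.
case: k hk e => [|[|[|k]]] hk e //=; crunch.
Qed.

Lemma zX n (i : 'I_n.+2) k : (2 < n)%N ->
  val (((zz n.+2) ^+ k)%g i) = if (i < 2)%N then val i else (2 + (i - 2 + k) %% n)%N.
Proof.
move=> hn; have hi := ltn_ord i; rewrite permX; elim: k => [|k IH].
  case: ifP => h //=; rewrite addn0 modn_small; lia.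
rewrite iterS zE //; case: (ltnP i 2) => h.
  by rewrite h in IH; rewrite IH h.
rewrite ltnNge h /= in IH *; rewrite !IH.
have hr := ltn_pmod (i - 2 + k) (ltnW (ltnW hn)).
set r := ((i - 2 + k) %% n)%N in hr *.
have -> : (i - 2 + k.+1 = (i - 2 + k) + 1)%N by lia.
rewrite -modnDml -/r.
have hm : ((r + 1) %% n)%N = (if r.+1 == n then 0 else r.+1)%N.
  by rewrite -(@modS_lt _ _ hr); congr (_ %% _); lia.
rewrite hm; crunch.
Qed.

Lemma zn n : (2 < n)%N -> ((zz n.+2) ^+ n = 1)%g.
Proof.
move=> hn; apply/permP => i; apply: val_inj; rewrite zX // perm1.
have hi := ltn_ord i; case: ifP => h //; rewrite modnDr modn_small; move/negbT: h => h /=; lia.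
Qed.

Lemma x3 n : ((cycle3 n) ^+ 3 = 1)%g.
Proof.
apply/permP => i; rewrite permX perm1; apply: val_inj => /=.
rewrite !cycle3E /cyc3; case h3: (2 < n) => //.
by case: i => [[|[|[|i]]] Hi].
Qed.

Lemma yt n : (2 < n)%N -> ((cyclen n.+2) ^ (t01 n) = cyclen n.+2 * cycle3 n.+2)%g.
Proof.
move=> hn; apply/permP => i; rewrite conjgE !permM /t01 tpermV -/(t01 n).
apply: val_inj; rewrite /= !(t01E, cyclenE, cycle3E) /cyc3 /=.
have h2 : (2 < n.+2)%N = true by lia.
move: (val i) (ltn_ord i) => k hk; rewrite h2.
case: k hk => [|[|k]] hk /=; rewrite ?(@modn_small 2) ?(@modn_small 1) //; try lia.
by rewrite (@modS_lt _ _ hk); case: (eqVneq k.+3 n.+2) => _ //=; crunch.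
Qed.

Lemma odd_permX T (s : {perm T}) k : odd_perm (s ^+ k)%g = odd k && odd_perm s.
Proof.
elim: k => [|k IH]; first by rewrite expg0 odd_perm1.
by rewrite expgS odd_permM IH /=; case: (odd k); case: (odd_perm s).
Qed.

Lemma x_Alt n : cycle3 n \in ('Alt_('I_n))%g.
Proof.
rewrite Alt_even; have := @odd_permX _ (cycle3 n) 3; rewrite x3 odd_perm1 /=.
by move=> <-.
Qed.

Lemma y_Alt n : odd n -> cyclen n \in ('Alt_('I_n))%g.
Proof.
move=> on; rewrite Alt_even; have := @odd_permX _ (cyclen n) n; rewrite yn odd_perm1 on /=.
by move=> <-.
Qed.

Lemma y_order n : prime n.+2 -> #[cyclen n.+2]%g = n.+2.
Proof.
move=> pn; have : (#[cyclen n.+2]%g %| n.+2)%N by rewrite order_dvdn yn.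
case/primeP: pn => _ /(_ _) h /h /orP [|/eqP //] /eqP.
move/eqP; rewrite order_eq1 => /eqP y1.
have : val (cyclen n.+2 (inord 0)) = 1%N by rewrite cyclenE inordK // modn_small.
by rewrite y1 perm1 /= inordK.
Qed.

Lemma gen_Alt n : (2 < n)%N -> prime n.+2 ->
  (('Alt_('I_n.+2))%g :=: <<[set cycle3 n.+2; cyclen n.+2]>>)%g.
Proof.
move=> hn pn.
set x := cycle3 n.+2; set y := cyclen n.+2; set t := t01 n.
set H := (<<[set x; y]>>)%G.
have xH : x \in H by apply: mem_gen; rewrite !inE eqxx.
have yH : y \in H by apply: mem_gen; rewrite !inE eqxx orbT.
have on : odd n.+2.
  by case: (even_prime pn) => [e|//]; lia.
have HA : H \subset ('Alt_('I_n.+2))%g.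
  rewrite gen_subG; apply/subsetP => g; rewrite in_set2 => /orP [] /eqP ->.
    exact: x_Alt.
  exact: y_Alt.
have tN : t \in 'N(H)%g.
  apply/normP; apply/eqP; rewrite eqEcard cardJg leqnn andbT.
  rewrite -genJ gen_subG; apply/subsetP => g /imsetP [g' g'in ->].
  move: g'in; rewrite in_set2 => /orP [] /eqP ->.
    by rewrite /x xt // groupM.
  by rewrite /y yt // groupM.
have SN : ('Sym_('I_n.+2))%g \subset 'N(H)%g.
  have <- : (<<[set tperm (inord 0 : 'I_n.+2) (inord 1); y]>> = ('Sym_('I_n.+2))%g)%g.
    apply: gen_tperm_circular_shift; rewrite ?card_ord //.
      by apply/eqP => /(congr1 val) /=; rewrite !inordK.
    exact: y_order.
  rewrite gen_subG; apply/subsetP => g; rewrite in_set2 => /orP [] /eqP ->.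
    exact: tN.
  by rewrite (subsetP (normG H)).
have nH : (H <| 'Alt_('I_n.+2))%g.
  by rewrite /normal HA (subset_trans (Alt_subset _) SN).
have : simple ('Alt_('I_n.+2))%G by apply: simple_Alt5; rewrite card_ord; lia.
case/simpleP => _ /(_ H nH) [H1|->] //.
move: xH; rewrite H1 inE => /eqP x1.
have : val (cycle3 n.+2 (inord 0)) = 1%N.
  by rewrite cycle3E /cyc3 /= inordK // ifT //; lia.
by rewrite -/x x1 perm1 /= inordK.
Qed.

Import GRing.Theory Num.Theory.
Local Open Scope ring_scope.

Definition U (j : int) : 'M[int]_2 := mx2 1 j 0 1.
Definition Lo (j : int) : 'M[int]_2 := mx2 1 0 j 1.

Lemma mx2_mul (a b c d e f g h : int) :
  mx2 a b c d *m mx2 e f g h = mx2 (a*e+b*g) (a*f+b*h) (c*e+d*g) (c*f+d*h).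
Proof.
apply/matrixP => i j; rewrite !mxE !big_ord_recl big_ord0 !mxE /=.
by case: i => [[|[|i]] hi]; case: j => [[|[|j]] hj] //=; rewrite addr0.
Qed.

Lemma mx2_1 : (1%:M : 'M[int]_2) = mx2 1 0 0 1.
Proof.
by apply/matrixP => i j; rewrite !mxE; case: i => [[|[|i]] hi]; case: j => [[|[|j]] hj].
Qed.

Lemma mx2E (A : 'M[int]_2) : A = mx2 (A 0 0) (A 0 1) (A 1 0) (A 1 1).
Proof.
by apply/matrixP => i j; rewrite !mxE; case: i => [[|[|i]] hi]; case: j => [[|[|j]] hj] //=;
  congr (A _ _); apply: val_inj.
Qed.

Lemma mx2_entries (a b c d : int) :
  [/\ mx2 a b c d 0 0 = a, mx2 a b c d 0 1 = b, mx2 a b c d 1 0 = c & mx2 a b c d 1 1 = d].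
Proof. by rewrite !mxE. Qed.

Lemma word_mx_cat w1 w2 : word_mx (w1 ++ w2) = word_mx w1 *m word_mx w2.
Proof.
elim: w1 => [|g w IH] /=; first by rewrite mul1mx.
by rewrite IH mulmxA.
Qed.

Lemma act_word_cat (gT : finGroupType) w1 w2 (p : gT * gT) :
  act_word (w1 ++ w2) p = act_word w1 (act_word w2 p).
Proof. by rewrite /act_word foldr_cat. Qed.

Definition wU k := nseq k genT.
Definition wL k := flatten (nseq k [:: Defs.genS; genT; genSinv]).

Lemma wU_mx k : word_mx (wU k) = U k%:Z.
Proof.
elim: k => [|k IH]; first by rewrite /= mx2_1.
have -> : word_mx (wU k.+1) = gen_mx genT *m word_mx (wU k) by [].
rewrite IH /U /= mx2_mul.
congr mx2; rewrite ?intS; ring.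
Qed.

Lemma wL_mx k : word_mx (wL k) = Lo (- k%:Z).
Proof.
elim: k => [|k IH]; first by rewrite /= mx2_1 /Lo oppr0.
have -> : wL k.+1 = [:: Defs.genS; genT; genSinv] ++ wL k by [].
rewrite word_mx_cat IH /= mulmx1 /Lo !mx2_mul.
congr mx2; rewrite ?intS; ring.
Qed.

Lemma wU_act (gT : finGroupType) k (p : gT * gT) :
  act_word (wU k) p = (p.1, (p.2 * (p.1^-1) ^+ k)%g).
Proof.
elim: k => [|k IH]; first by rewrite /= expg0 mulg1; case: p.
have -> : act_word (wU k.+1) p = act_gen genT (act_word (wU k) p) by [].
by rewrite IH /= expgSr mulgA.
Qed.

Lemma wL_act (gT : finGroupType) k (p : gT * gT) :
  act_word (wL k) p = ((p.2 ^+ k * p.1)%g, p.2).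
Proof.
elim: k => [|k IH]; first by rewrite /= expg0 mul1g; case: p.
have -> : wL k.+1 = [:: Defs.genS; genT; genSinv] ++ wL k by [].
rewrite act_word_cat IH /=.
by rewrite !invMg !invgK expgS !mulgA.
Qed.

Definition Xp n := (cycle3 n, cyclen n).
Definition Stab n w := act_word w (Xp n) = Xp n.

Lemma Stab_cat n w1 w2 : Stab n w1 -> Stab n w2 -> Stab n (w1 ++ w2).
Proof. by rewrite /Stab act_word_cat => h1 h2; rewrite h2 h1. Qed.

Lemma Stab_nil n : Stab n [::].
Proof. by []. Qed.

Lemma Stab_veech n w : Stab n w ->
  veech_group ('Alt_('I_n))%G (cycle3 n) (cyclen n) (word_mx w).
Proof.
move=> h; exists w; split => //; rewrite -/(Xp n) h.
by exists (idm _); split; [exact: idm_isom | by [] | by []].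
Qed.

Lemma xinv n : ((cycle3 n)^-1 = cycle3 n * cycle3 n)%g.
Proof.
apply: (@mulgI _ (cycle3 n)); rewrite mulgV.
by rewrite -(x3 n) !expgS expg0 mulg1.
Qed.

Definition E1 e := wU (3 * e).
Definition E2 N e := wL (N * e).
Definition E3 N e := [:: genT] ++ wL (N * e) ++ [:: genTinv].
Definition E4 n e := [:: genTinv] ++ wL (n * e) ++ [:: genT].

Lemma E1_stab N e : Stab N (E1 e).
Proof.
rewrite /Stab /E1 wU_act /= expgM expVgn x3 invg1 expg1n mulg1.
by [].
Qed.

Lemma E2_stab N e : Stab N (E2 N e).
Proof. by rewrite /Stab /E2 wL_act /= expgM yn expg1n mul1g. Qed.

Lemma E3_stab n e : (2 < n)%N -> Stab n.+2 (E3 n.+2 e).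
Proof.
move=> hn; rewrite /Stab /E3 !act_word_cat wL_act /=.
rewrite -(yt _ hn) -conjXg expgM yn expg1n conj1g mul1g.
by rewrite (yt _ hn) mulgK.
Qed.

Lemma E4_stab n e : (2 < n)%N -> Stab n.+2 (E4 n e).
Proof.
move=> hn; rewrite /Stab /E4 !act_word_cat wL_act /=.
have -> : (cyclen n.+2 * (cycle3 n.+2)^-1)%g = zz n.+2 by rewrite xinv.
by rewrite expgM zn // expg1n mul1g /zz -xinv mulgKV.
Qed.

Lemma E1_mx e : word_mx (E1 e) = U (3 * e)%N%:Z.
Proof. by rewrite /E1 wU_mx. Qed.

Lemma E2_mx N e : word_mx (E2 N e) = Lo (- (N * e)%N%:Z).
Proof. by rewrite /E2 wL_mx. Qed.

Lemma E3_mx N e : word_mx (E3 N e) = U 1 *m Lo (- (N * e)%N%:Z) *m U (-1).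
Proof. by rewrite /E3 !word_mx_cat wL_mx /= !mulmx1 mulmxA. Qed.

Lemma E4_mx n e : word_mx (E4 n e) = U (-1) *m Lo (- (n * e)%N%:Z) *m U 1.
Proof. by rewrite /E4 !word_mx_cat wL_mx /= !mulmx1 mulmxA. Qed.

Definition mxc (m : int) (A B : 'M[int]_2) := forall i j, (m %| A i j - B i j)%Z.

Lemma mxc_refl m A : mxc m A A.
Proof. by move=> i j; rewrite subrr dvdz0. Qed.

Lemma mxc_trans m A B C : mxc m A B -> mxc m B C -> mxc m A C.
Proof.
move=> h1 h2 i j; have -> : A i j - C i j = (A i j - B i j) + (B i j - C i j) by ring.
exact: rpredD.
Qed.

Lemma mxc_mul m A A' B B' : mxc m A A' -> mxc m B B' -> mxc m (A *m B) (A' *m B').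
Proof.
move=> h1 h2 i j; rewrite !mxE -sumrB; apply: rpred_sum => k _.
have -> : A i k * B k j - A' i k * B' k j =
  (A i k - A' i k) * B k j + A' i k * (B k j - B' k j) by ring.
by apply: rpredD; [apply: dvdz_mulr | apply: dvdz_mull].
Qed.

Lemma mxc_mx2 m a b c d a' b' c' d' :
  (m %| a - a')%Z -> (m %| b - b')%Z -> (m %| c - c')%Z -> (m %| d - d')%Z ->
  mxc m (mx2 a b c d) (mx2 a' b' c' d').
Proof.
by move=> ha hb hc hd i j; rewrite !mxE; case: i => [[|[|i]] hi]; case: j => [[|[|j]] hj].
Qed.

Lemma mxc_U m a b : (m %| a - b)%Z -> mxc m (U a) (U b).
Proof. by move=> h; apply: mxc_mx2; rewrite // subrr dvdz0. Qed.

Lemma mxc_Lo m a b : (m %| a - b)%Z -> mxc m (Lo a) (Lo b).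
Proof. by move=> h; apply: mxc_mx2; rewrite // subrr dvdz0. Qed.

Lemma mxc_crt (q r : nat) A B : coprime q r -> mxc q A B -> mxc r A B -> mxc (q * r)%N A B.
Proof.
move=> cqr h1 h2 i j; by rewrite PoszM Gauss_dvdz ?h1 ?h2 // coprimezE.

Qed.

Lemma mxc_red (m : nat) A B : (1 < m)%N -> mxc m A B -> red_mx m A = red_mx m B.
Proof.
move=> hm h; apply/matrixP => i j; rewrite !mxE; apply/eqP; rewrite -subr_eq0 -rmorphB /=.
case/dvdzP: (h i j) => k ->; rewrite rmorphM /= -[(m%:Z)%:~R]/(m%:R) pchar_Zp // mulr0 //.
Qed.

Lemma red_cong (m : nat) (a b : int) : (1 < m)%N ->
  (a%:~R : 'Z_m) = b%:~R -> (m%:Z %| a - b)%Z.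
Proof.
move=> hm; move/eqP; rewrite -subr_eq0 -rmorphB /=; move: (a - b) => z /eqP hz.
have hk : ((`|z|%N)%:R : 'Z_m) = 0.
  case: z hz => k /=; first by rewrite pmulrn.
  by rewrite NegzE mulrNz => /eqP; rewrite oppr_eq0 => /eqP.
have : (val ((`|z|%N)%:R : 'Z_m) = 0)%N by rewrite hk.
rewrite /= val_Zp_nat // => /eqP hd.
by rewrite dvdzE /=; apply/dvdnP; exists (`|z| %/ m)%N; rewrite {1}(divn_eq `|z| m) (eqP hd) addn0.
Qed.

Definition elem (p : bool * int) := if p.1 then U p.2 else Lo p.2.
Definition prodE (l : seq (bool * int)) := foldr (fun p M => elem p *m M) 1%:M l.
Definition invl (l : seq (bool * int)) := rev (map (fun p => (p.1, - p.2)) l).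

Lemma prodE_cat l1 l2 : prodE (l1 ++ l2) = prodE l1 *m prodE l2.
Proof. by elim: l1 => [|p l IH] /=; rewrite ?mul1mx // IH mulmxA. Qed.

Lemma elemV p : elem (p.1, - p.2) *m elem p = 1%:M.
Proof.
by case: p => [[] j]; rewrite /elem /U /Lo /= mx2_mul mx2_1; congr mx2; ring.
Qed.

Lemma prodE_invl l : prodE (invl l) *m prodE l = 1%:M.
Proof.
elim: l => [|p l IH]; first by rewrite /= mulmx1.
rewrite /invl /= rev_cons -cats1 -/(invl l) prodE_cat /= mulmx1.
by rewrite -mulmxA (mulmxA (elem _)) elemV mul1mx IH.
Qed.

Lemma det_mx2 (a b c d : int) : \det (mx2 a b c d) = a * d - b * c.
Proof.
rewrite (expand_det_row _ 0) !big_ord_recl big_ord0 /cofactor !det_mx11 !mxE /=.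
by rewrite /bump /= expr0 expr1; ring.
Qed.

Lemma det_prodE l : \det (prodE l) = 1.
Proof.
elim: l => [|p l IH] /=; first by rewrite det1.
by rewrite det_mulmx IH mulr1; case: p => [[] j]; rewrite /elem /U /Lo /= det_mx2; ring.
Qed.

Lemma euclid (N : nat) (a c : int) : (`|c| <= N)%N ->
  exists l, (prodE l) 1 0 * a + (prodE l) 1 1 * c = 0.
Proof.
elim: N a c => [|N IH] a c hc.
  exists [::]; move: hc; rewrite leqn0 absz_eq0 => /eqP ->.
  by rewrite /= mx2_1 !mxE /=; ring.
case: (eqVneq c 0) => [->|c0].
  by exists [::]; rewrite /= mx2_1 !mxE /=; ring.
have hr0 : 0 <= (a %% c)%Z by apply: modz_ge0.
have hr1 : (a %% c)%Z < `|c|%:Z by rewrite abszE ltz_mod.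
have [l hl] : exists l, (prodE l) 1 0 * c + (prodE l) 1 1 * (- (a %% c)%Z) = 0.
  apply: IH; rewrite abszN; move: hc; lia.
exists (l ++ [:: (true, 1); (false, -1); (true, 1); (true, - (a %/ c)%Z)]).
rewrite prodE_cat [prodE l]mx2E /= mulmx1 /elem /U /Lo /= !mx2_mul !mxE /=.
have ha := divz_eq a c.
set q := (a %/ c)%Z in ha *; set r := (a %% c)%Z in ha hl *.
rewrite -[RHS]hl {1}ha; ring.
Qed.

Lemma dvd_ring (m s e K : int) : (m %| s)%Z -> e = s * K -> (m %| e)%Z.
Proof. by move=> h ->; apply: dvdz_mulr. Qed.

Lemma elem_gen (m : nat) (A : 'M[int]_2) :
  (m%:Z %| \det A - 1)%Z -> exists l, mxc m A (prodE l).
Proof.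
move=> hdet.
have [l hl] := @euclid _ (A 0 0) (A 1 0) (leqnn `|A 1 0|).
set C := prodE l *m A.
have C10 : C 1 0 = 0.
  rewrite /C mxE !big_ord_recl big_ord0 addr0 -[RHS]hl.
  by congr (_ * _ + _ * _); congr (_ _ _); apply: val_inj.
have hC : C = mx2 (C 0 0) (C 0 1) 0 (C 1 1) by rewrite {1}[C]mx2E C10.
have dC : \det C = \det A by rewrite /C det_mulmx det_prodE mul1r.
set u := C 0 0 in hC; set b := C 0 1 in hC; set v := C 1 1 in hC.
have hs : (m%:Z %| u * v - 1)%Z.
  by move: hdet; rewrite -dC hC det_mx2 mulr0 subr0.
exists (invl l ++ [:: (true, u); (false, - v); (true, u); (true, -1); (false, 1);
  (true, -1); (true, v * b)]).
have -> : A = prodE (invl l) *m C by rewrite /C mulmxA prodE_invl mul1mx.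
rewrite prodE_cat; apply: mxc_mul; first exact: mxc_refl.
rewrite hC /prodE /= mulmx1 /elem /= /U /Lo !mx2_mul; apply: mxc_mx2.
- by apply: (@dvd_ring _ _ _ u hs); ring.
- by apply: (@dvd_ring _ _ _ (b * (u * v - 1) - 1) hs); ring.
- by apply: (@dvd_ring _ _ _ 1 hs); ring.
- by apply: (@dvd_ring _ _ _ (v * b) hs); ring.
Qed.

Definition SG n (m : nat) M := exists w, Stab n w /\ mxc m (word_mx w) M.

Lemma SG_mul n m M M' : SG n m M -> SG n m M' -> SG n m (M *m M').
Proof.
case=> w [sw cw] [w' [sw' cw']]; exists (w ++ w'); split; first exact: Stab_cat.
by rewrite word_mx_cat; apply: mxc_mul.
Qed.

Lemma SG_cong n m M M' : SG n m M -> mxc m M M' -> SG n m M'.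
Proof. by case=> w [sw cw] h; exists w; split => //; apply: mxc_trans h. Qed.

Lemma SG_1 n m : SG n m 1%:M.
Proof. by exists [::]; split; [exact: Stab_nil | exact: mxc_refl]. Qed.

Lemma mxc_sym m A B : mxc m A B -> mxc m B A.
Proof.
move=> h i j; have -> : B i j - A i j = - (A i j - B i j) by ring.
by rewrite rpredN.
Qed.

Lemma UL (w q r : nat) (s : int) : (0 < q)%N -> coprime (w * r) q ->
  exists e : nat, (r %| e)%N /\ (q%:Z %| (w * e)%N%:Z - s)%Z.
Proof.
move=> q0 cop.
have : coprimez (w * r)%N%:Z q%:Z by rewrite coprimezE.
case/coprimezP => [[u v]] /= huv.
have qn0 : q%:Z != 0 by rewrite eqz_nat -lt0n.
set c := ((u * s) %% q%:Z)%Z.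
have c0 : 0 <= c by apply: modz_ge0.
exists (r * `|c|)%N; split; first exact: dvdn_mulr.
have hc : (`|c|%N)%:Z = c by rewrite gez0_abs.
have hd := divz_eq (u * s) q%:Z; rewrite -/c in hd.
have -> : (w * (r * `|c|))%N%:Z - s =
   (w * r)%N%:Z * (`|c|%N%:Z - u * s) + s * ((w * r)%N%:Z * u - 1).
  rewrite !PoszM; ring.
apply: rpredD.
  apply: dvdz_mull; rewrite hc; apply/dvdzP; exists (- ((u * s) %/ q%:Z)%Z).
  by set d := ((u * s) %/ q%:Z)%Z in hd *; rewrite hd; ring.
apply: dvdz_mull; apply/dvdzP; exists (- v).
by rewrite -[1]huv; ring.
Qed.

Lemma dvdA (q e w : nat) : (q %| e)%N -> (q%:Z %| (w * e)%N%:Z - 0)%Z.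
Proof. by move=> h; rewrite subr0 dvdzE /=; apply: dvdn_mull. Qed.

Lemma dvdAN (q e w : nat) : (q %| e)%N -> (q%:Z %| - (w * e)%N%:Z - 0)%Z.
Proof. by move=> h; rewrite subr0 rpredN dvdzE /=; apply: dvdn_mull. Qed.

Lemma dvdN (q : int) (x s : int) : (q %| x - s)%Z -> (q %| - x - (- s))%Z.
Proof. by move=> h; rewrite -opprD rpredN. Qed.

Lemma coprime_N3 N m : prime N -> N != 3%N -> coprime N (m`_3)%N.
Proof.
move=> pN N3; rewrite p_part coprimeXr //.
by rewrite prime_coprime // dvdn_prime2 // eq_sym.
Qed.

Lemma KT n m : (2 < n)%N -> prime n.+2 -> (1 < m)%N -> SG n.+2 m (U 1).
Proof.
move=> hn pN hm.
have m0 : (0 < m)%N by lia.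
set q := (m`_3)%N; set r := (m`_(3^'))%N.
have hqr : (q * r = m)%N := partnC _ m0.
have cqr : coprime q r := coprime_partC _ _ _.
have c3r : coprime 3 r := pnat_coprime (pnat_id (isT : prime 3)) (part_pnat _ _).
have cNq : coprime n.+2 q by apply: coprime_N3 => //; apply/eqP; lia.
have q0 : (0 < q)%N := part_gt0 _ _.
have r0 : (0 < r)%N := part_gt0 _ _.
have c3q : coprime (3 * q) r by rewrite coprimeMl c3r cqr.
have [e1 [de1 he1]] := @UL 3 r q 1 r0 c3q.
have cNr : coprime (n.+2 * r) q by rewrite coprimeMl cNq coprime_sym cqr.
have [f1 [df1 hf1]] := @UL n.+2 q r 1 q0 cNr.
have [f2 [df2 hf2]] := @UL n.+2 q r 1 q0 cNr.
have [f3 [df3 hf3]] := @UL n.+2 q r (-1) q0 cNr.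
exists (E1 e1 ++ (E2 n.+2 f1 ++ (E3 n.+2 f2 ++ E2 n.+2 f3))); split.
  apply: Stab_cat; first exact: E1_stab.
  apply: Stab_cat; first exact: E2_stab.
  by apply: Stab_cat; [exact: E3_stab | exact: E2_stab].
rewrite word_mx_cat E1_mx word_mx_cat E2_mx word_mx_cat E3_mx E2_mx -hqr.
apply: mxc_crt => //.
  apply: (@mxc_trans _ _ (U 0 *m (Lo (-1) *m ((U 1 *m Lo (-1) *m U (-1)) *m Lo 1)))).
    apply: mxc_mul; first by apply: mxc_U; apply: dvdA.
    apply: mxc_mul; first by apply: mxc_Lo; apply: dvdN.
    apply: mxc_mul; last by apply: mxc_Lo; rewrite -[1](opprK 1); apply: dvdN.
    apply: mxc_mul; last exact: mxc_refl.
    by apply: mxc_mul; [exact: mxc_refl | apply: mxc_Lo; apply: dvdN].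
  suff -> : U 0 *m (Lo (-1) *m ((U 1 *m Lo (-1) *m U (-1)) *m Lo 1)) = U 1 by apply: mxc_refl.
  by rewrite /U /Lo !mx2_mul; congr mx2; ring.
apply: (@mxc_trans _ _ (U 1 *m (Lo 0 *m ((U 1 *m Lo 0 *m U (-1)) *m Lo 0)))).
  apply: mxc_mul; first by apply: mxc_U.
  apply: mxc_mul; first by apply: mxc_Lo; apply: dvdAN.
  apply: mxc_mul; last by apply: mxc_Lo; apply: dvdAN.
  apply: mxc_mul; last exact: mxc_refl.
  by apply: mxc_mul; [exact: mxc_refl | apply: mxc_Lo; apply: dvdAN].
suff -> : U 1 *m (Lo 0 *m ((U 1 *m Lo 0 *m U (-1)) *m Lo 0)) = U 1 by apply: mxc_refl.
by rewrite /U /Lo !mx2_mul; congr mx2; ring.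
Qed.

Lemma KL n m : (2 < n)%N -> prime n.+2 -> (1 < m)%N -> SG n.+2 m (Lo 1).
Proof.
move=> hn pN hm.
have m0 : (0 < m)%N by lia.
set q := (m`_(n.+2))%N; set r := (m`_(n.+2^'))%N.
have hqr : (q * r = m)%N := partnC _ m0.
have cqr : coprime q r := coprime_partC _ _ _.
have cNr : coprime n.+2 r := pnat_coprime (pnat_id pN) (part_pnat _ _).
have oN : odd n.+2 by case: (even_prime pN) => [e|//]; lia.
have c3q : coprime 3 q.
  rewrite /q p_part coprimeXr // prime_coprime // dvdn_prime2 //; apply/eqP; lia.
have cnq : coprime n q.
  rewrite /q p_part coprimeXr // /coprime -addn2 gcdnDl -/(coprime n 2) coprimen2.
  by move: oN; rewrite /=; case: (odd n).
have q0 : (0 < q)%N := part_gt0 _ _.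
have r0 : (0 < r)%N := part_gt0 _ _.
have cNq : coprime (n.+2 * q) r by rewrite coprimeMl cNr cqr.
have [e [de he]] := @UL n.+2 r q (-1) r0 cNq.
have c3r : coprime (3 * r) q by rewrite coprimeMl c3q coprime_sym cqr.
have cnr : coprime (n * r) q by rewrite coprimeMl cnq coprime_sym cqr.
have [f1 [df1 hf1]] := @UL 3 q r 1 q0 c3r.
have [f2 [df2 hf2]] := @UL n q r (-1) q0 cnr.
have [f3 [df3 hf3]] := @UL 3 q r (-1) q0 c3r.
exists (E2 n.+2 e ++ (E1 f1 ++ (E4 n f2 ++ E1 f3))); split.
  apply: Stab_cat; first exact: E2_stab.
  apply: Stab_cat; first exact: E1_stab.
  by apply: Stab_cat; [exact: E4_stab | exact: E1_stab].
rewrite word_mx_cat E2_mx word_mx_cat E1_mx word_mx_cat E4_mx E1_mx -hqr.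
apply: mxc_crt => //.
  apply: (@mxc_trans _ _ (Lo 0 *m (U 1 *m ((U (-1) *m Lo 1 *m U 1) *m U (-1))))).
    apply: mxc_mul; first by apply: mxc_Lo; apply: dvdAN.
    apply: mxc_mul; first by apply: mxc_U.
    apply: mxc_mul; last by apply: mxc_U.
    apply: mxc_mul; last exact: mxc_refl.
    apply: mxc_mul; first exact: mxc_refl.
    by apply: mxc_Lo; rewrite -[1](opprK 1); apply: dvdN.
  suff -> : Lo 0 *m (U 1 *m ((U (-1) *m Lo 1 *m U 1) *m U (-1))) = Lo 1 by apply: mxc_refl.
  by rewrite /U /Lo !mx2_mul; congr mx2; ring.
apply: (@mxc_trans _ _ (Lo 1 *m (U 0 *m ((U (-1) *m Lo 0 *m U 1) *m U 0)))).
  apply: mxc_mul; first by apply: mxc_Lo; rewrite -[1](opprK 1); apply: dvdN.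
  apply: mxc_mul; first by apply: mxc_U; apply: dvdA.
  apply: mxc_mul; last by apply: mxc_U; apply: dvdA.
  apply: mxc_mul; last exact: mxc_refl.
  by apply: mxc_mul; [exact: mxc_refl | apply: mxc_Lo; apply: dvdAN].
suff -> : Lo 1 *m (U 0 *m ((U (-1) *m Lo 0 *m U 1) *m U 0)) = Lo 1 by apply: mxc_refl.
by rewrite /U /Lo !mx2_mul; congr mx2; ring.
Qed.

Lemma mxc_modz (m : nat) (j : int) : (0 < m)%N ->
  (m%:Z %| (`|(j %% m%:Z)%Z|%N)%:Z - j)%Z.
Proof.
move=> m0; have mn0 : m%:Z != 0 by rewrite eqz_nat -lt0n.
rewrite gez0_abs ?modz_ge0 //.
have hd := divz_eq j m%:Z; set d := (j %/ m%:Z)%Z in hd; set c := (j %% m%:Z)%Z in hd *.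
apply/dvdzP; exists (- d); rewrite [in LHS]hd; ring.
Qed.

Lemma SG_elem n m p : (2 < n)%N -> prime n.+2 -> (1 < m)%N -> SG n.+2 m (elem p).
Proof.
move=> hn pN hm; have m0 : (0 < m)%N by lia.
case: p => [[] j]; rewrite /elem /=.
- have hk : forall k : nat, SG n.+2 m (U k%:Z).
    elim=> [|k IH]; first by rewrite /U -mx2_1; apply: SG_1.
    have -> : U k.+1%:Z = U 1 *m U k%:Z by rewrite /U mx2_mul; congr mx2; rewrite intS; ring.
    by apply: SG_mul => //; apply: KT.
  by apply: SG_cong (hk _) _; apply: mxc_U; apply: mxc_modz.
- have hk : forall k : nat, SG n.+2 m (Lo k%:Z).
    elim=> [|k IH]; first by rewrite /Lo -mx2_1; apply: SG_1.
    have -> : Lo k.+1%:Z = Lo 1 *m Lo k%:Z by rewrite /Lo mx2_mul; congr mx2; rewrite intS; ring.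
    by apply: SG_mul => //; apply: KL.
  by apply: SG_cong (hk _) _; apply: mxc_Lo; apply: mxc_modz.
Qed.

Lemma SG_prodE n m l : (2 < n)%N -> prime n.+2 -> (1 < m)%N -> SG n.+2 m (prodE l).
Proof.
move=> hn pN hm; elim: l => [|p l IH] /=; first exact: SG_1.
by apply: SG_mul => //; apply: SG_elem.
Qed.

Lemma TNC n : (2 < n)%N -> prime n.+2 ->
  totally_non_congruence (veech_group ('Alt_('I_n.+2))%G (cycle3 n.+2) (cyclen n.+2)).
Proof.
move=> hn pN; split.
  by exists (word_mx [::]); apply: Stab_veech; exact: Stab_nil.
move=> m hm B dB.
pose A : 'M[int]_2 := \matrix_(i, j) ((B i j : nat)%:Z).
have rA : red_mx m A = B.
  by apply/matrixP => i j; rewrite !mxE; apply: natr_Zp.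
have dA : (m%:Z %| \det A - 1)%Z.
  apply: red_cong => //.
  have -> : ((\det A)%:~R : 'Z_m) = \det (red_mx m A).
    by rewrite /red_mx (det_map_mx (intr : {rmorphism int -> 'Z_m})).
  by rewrite rA dB.
have [l hl] := @elem_gen m A dA.
have [w [sw cw]] := @SG_prodE n m l hn pN hm.
exists (word_mx w); split; first exact: Stab_veech.
rewrite -rA; apply: mxc_red => //; apply: mxc_trans; first exact: cw.
by apply: mxc_sym; exact: hl.
Qed.
Local Close Scope ring_scope.

Theorem mainTheorem3 (n : nat) :
  prime n -> (5 <= n)%N ->
  regular_origami ('Alt_('I_n))%G (cycle3 n) (cyclen n) /\
  totally_non_congruence (veech_group ('Alt_('I_n))%G (cycle3 n) (cyclen n)).
Proof.
case: n => [|[|n]] // pn hn.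
have hn' : (2 < n)%N by lia.
split; first exact: gen_Alt.
exact: TNC.
Qed.
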